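(* Let $m\ge1$, $q=2^m$, let $n$ be even, and let $L(x)=ax^{2^k}+bx^{2^l}$ with $a,b\in\mathbb F_{q^n}$ and integers $0\le k<l<mn$, such that $L$ is nonzero as a map on $\mathbb F_{q^n}$. Let $d=\gcd(l-k,mn)$, $e=\gcd(l-k,2m)$ and $\delta=a^{q^2}b+ab^{q^2}$. Then $\mathrm{Tr}(x^{q+1})+L(x)$ is a permutation polynomial of $\mathbb F_{q^n}$ if and only if $a^{\frac{q^n-1}{2^d-1}}\ne b^{\frac{q^n-1}{2^d-1}}$ and one of the following holds: (1) $l-k\equiv m\pmod{2m}$, $a\notin\mathbb F_{q^2}$, $\delta\ne0$ and \[\delta^q\big(a^{q^2}+a\big)+\delta\big(b^{q^3}+b^q\big)=\delta^q\big(b^{q^2}+b\big)+\delta\big(a^{q^3}+a^q\big)=0;\] (2) $k\not\equiv l\pmod{2m}$, $a,b\in\mathbb F_{q^2}$ and $a^{\frac{q^2-1}{2^e-1}}\ne b^{\frac{q^2-1}{2^e-1}}$; (3) $k\equiv l\pmod{2m}$ and $a+b\in\mathbb F_{q^2}$.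
   Context: $\mathrm{Tr}$ denotes the trace map of $\mathbb F_{q^n}$ over $\mathbb F_q$. Polynomials are regarded as maps on $\mathbb F_{q^n}$; a permutation polynomial is one inducing a bijection of $\mathbb F_{q^n}$. *)

(* Defs.v *)
From HB Require Import structures.
From mathcomp Require Import all_boot all_order all_algebra all_field.
Set Implicit Arguments. Unset Strict Implicit. Unset Printing Implicit Defensive.
Import GRing.Theory.
Local Open Scope ring_scope.

Definition trace_q {F : finFieldType} (q n : nat) (y : F) : F :=
  \sum_(i < n) y ^+ (q ^ i).

Definition in_Fq2 {F : finFieldType} (q : nat) (x : F) : bool :=
  x ^+ (q ^ 2) == x.

Definition linL {F : finFieldType} (a b : F) (k l : nat) (x : F) : F :=
  a * x ^+ (2 ^ k) + b * x ^+ (2 ^ l).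

(* Main.v *)
From mathcomp Require Import all_boot all_order all_algebra all_field.
From mathcomp Require Import cyclic.
From mathcomp Require Import zify ring.
Require Import Defs.
Set Implicit Arguments. Unset Strict Implicit. Unset Printing Implicit Defensive.
Import GRing.Theory.

Lemma gcd_pow2 a b : gcdn (2 ^ a - 1) (2 ^ b - 1) = 2 ^ (gcdn a b) - 1.
Proof.
move: {2}(a + b) (leqnn (a + b)) => s.
elim: s a b => [|s IH] a b Hs.
  have -> : a = 0 by lia.
  have -> : b = 0 by lia.
  by [].
case: a Hs => [|a] Hs; first by rewrite gcd0n expn0 gcd0n.
case: b Hs => [|b] Hs; first by rewrite gcdn0 expn0 gcdn0.
case: (leqP a.+1 b.+1) => Hab.
- have E : 2 ^ b.+1 - 1 = 2 ^ (b.+1 - a.+1) * (2 ^ a.+1 - 1) + (2 ^ (b.+1 - a.+1) - 1).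
    have -> : 2 ^ b.+1 = 2 ^ (b.+1 - a.+1) * 2 ^ a.+1 by rewrite -expnD subnK.
    have h1 : 0 < 2 ^ (b.+1 - a.+1) by rewrite expn_gt0.
    have h2 : 0 < 2 ^ a.+1 by rewrite expn_gt0.
    move: h1 h2; move: (2 ^ (b.+1 - a.+1)) (2 ^ a.+1) => X Y; nia.
  rewrite E gcdnMDl.
  have -> : gcdn a.+1 b.+1 = gcdn a.+1 (b.+1 - a.+1).
    by rewrite -{1}(subnK Hab) gcdnDr.
  apply: IH; lia.
- rewrite gcdnC [gcdn a.+1 _]gcdnC.
  have Hba : b.+1 <= a.+1 by lia.
  have E : 2 ^ a.+1 - 1 = 2 ^ (a.+1 - b.+1) * (2 ^ b.+1 - 1) + (2 ^ (a.+1 - b.+1) - 1).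
    have -> : 2 ^ a.+1 = 2 ^ (a.+1 - b.+1) * 2 ^ b.+1 by rewrite -expnD subnK.
    have h1 : 0 < 2 ^ (a.+1 - b.+1) by rewrite expn_gt0.
    have h2 : 0 < 2 ^ b.+1 by rewrite expn_gt0.
    move: h1 h2; move: (2 ^ (a.+1 - b.+1)) (2 ^ b.+1) => X Y; nia.
  rewrite E gcdnMDl.
  have -> : gcdn b.+1 a.+1 = gcdn b.+1 (a.+1 - b.+1).
    by rewrite -{1}(subnK Hba) gcdnDr.
  apply: IH; lia.
Qed.

Lemma dvd_pow2 (d r : nat) : d %| r -> dvdn (2 ^ d - 1) (2 ^ r - 1).
Proof.
move=> H; have := dvdn_gcdr (2 ^ d - 1) (2 ^ r - 1).
by rewrite gcd_pow2 (gcdn_idPl H).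
Qed.

Lemma pow2_dvd_inv (m j : nat) : dvdn (2 ^ m - 1) (2 ^ j - 1) -> m %| j.
Proof.
move/gcdn_idPl; rewrite gcd_pow2 => H.
have H1 : 0 < 2 ^ (gcdn m j) by rewrite expn_gt0.
have H2 : 0 < 2 ^ m by rewrite expn_gt0.
have : 2 ^ (gcdn m j) = 2 ^ m by lia.
by move/eqP; rewrite eqn_exp2l // => /eqP/gcdn_idPl.
Qed.

Section Char2.
Variable F : finFieldType.
Local Open Scope ring_scope.
Hypothesis ch2 : 2%N \in [pchar F].

Lemma addxx (x : F) : x + x = 0. Proof. exact: addrr_pchar2 ch2 x. Qed.
Lemma oppx (x : F) : - x = x. Proof. exact: oppr_pchar2 ch2 x. Qed.
Lemma add_eq0 (x y : F) : x + y = 0 -> x = y.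
Proof. by move=> H; rewrite -[y]add0r -H -addrA addxx addr0. Qed.
Lemma eq_add0 (x y : F) : x = y -> x + y = 0.
Proof. by move=> ->; rewrite addxx. Qed.

Lemma frobD k (x y : F) : (x + y) ^+ (2 ^ k) = x ^+ (2 ^ k) + y ^+ (2 ^ k).
Proof.
elim: k x y => [|k IH] x y; first by rewrite expn0 !expr1.
rewrite expnS !exprM sqrrD mulr2n addxx addr0; exact: IH.
Qed.

Lemma frob0 k : (0 : F) ^+ (2 ^ k) = 0.
Proof. by rewrite expr0n expn_eq0. Qed.

Lemma frobSum k (I : Type) (r : seq I) (P : pred I) (G : I -> F) :
  (\sum_(i <- r | P i) G i) ^+ (2 ^ k) = \sum_(i <- r | P i) (G i) ^+ (2 ^ k).
Proof.
apply: (big_morph (fun x : F => x ^+ (2 ^ k))); last exact: frob0.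
by move=> x y; rewrite frobD.
Qed.

Lemma frobB k (x y : F) : (x - y) ^+ (2 ^ k) = x ^+ (2 ^ k) - y ^+ (2 ^ k).
Proof. by rewrite !oppx frobD. Qed.

End Char2.
Section Main.
Variable F : finFieldType.
Variables m n : nat.
Hypothesis m_gt0 : (0 < m)%N.
Hypothesis n_even : ~~ odd n.
Hypothesis cardF : #|F| = (2 ^ (m * n))%N.
Local Open Scope ring_scope.

Let q := (2 ^ m)%N.

Lemma ch2 : 2%N \in [pchar F].
Proof. exact: (card_finPcharP cardF). Qed.

Lemma q_gt1 : (1 < q)%N.
Proof. by rewrite /q -{1}(expn0 2) ltn_exp2l. Qed.

Lemma n_gt0 : (0 < n)%N.
Proof.
case: n cardF => [|n'] // H; have := finNzRing_gt1 F; rewrite H muln0 expn0 //.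
Qed.

Lemma expq i : (q ^ i = 2 ^ (m * i))%N.
Proof. by rewrite /q -expnM. Qed.

Lemma xQ (x : F) : x ^+ (q ^ n) = x.
Proof. by rewrite expq -cardF expf_card. Qed.

Lemma fixpow (x : F) e t : x ^+ e = x -> x ^+ (e ^ t) = x.
Proof.
move=> H; elim: t => [|t IH]; first by rewrite expn0 expr1.
by rewrite expnSr exprM IH H.
Qed.

Lemma frobDq i (x y : F) : (x + y) ^+ (q ^ i) = x ^+ (q ^ i) + y ^+ (q ^ i).
Proof. by rewrite expq (frobD ch2). Qed.

Lemma powq_pow2 (x : F) i : x ^+ (q ^ i) = x ^+ (2 ^ (m * i)).
Proof. by rewrite expq. Qed.

Notation Tr := (trace_q q n).

Lemma Tr_frob (y : F) : (Tr y) ^+ q = Tr (y ^+ q).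
Proof.
rewrite /trace_q /q (frobSum ch2); apply: eq_bigr => i _.
by rewrite -!exprM mulnC.
Qed.

Lemma Tr_shift (y : F) : Tr (y ^+ q) = Tr y.
Proof.
rewrite /trace_q; case: n n_gt0 (xQ y) => [|n'] // _ Hy.
rewrite big_ord_recr big_ord_recl /= -exprM -expnS Hy expn0 expr1 addrC.
congr (_ + _); apply: eq_bigr => i _; by rewrite -exprM -expnS.
Qed.

Lemma Tr_q (y : F) : (Tr y) ^+ q = Tr y.
Proof. by rewrite Tr_frob Tr_shift. Qed.

Lemma Tr_add (x y : F) : Tr (x + y) = Tr x + Tr y.
Proof. by rewrite /trace_q -big_split; apply: eq_bigr => i _; rewrite frobDq. Qed.

Lemma Tr_scal (c z : F) : c ^+ q = c -> Tr (c * z) = c * Tr z.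
Proof.
move=> Hc; rewrite /trace_q mulr_sumr; apply: eq_bigr => i _.
by rewrite exprMn (fixpow _ Hc).
Qed.

Lemma Tr_fixed (w : F) : w ^+ q = w -> Tr w = 0.
Proof.
move=> Hw; rewrite /trace_q (eq_bigr (fun _ => w)); last by move=> i _; rewrite fixpow.
rewrite sumr_const card_ord.
have -> : n = (2 * n./2)%N by rewrite -{1}(odd_double_half n) (negbTE n_even) add0n -muln2 mulnC.
by rewrite mulrnA mulr2n (addxx ch2) mul0rn.
Qed.

Lemma Tr_nonzero : exists z : F, Tr z != 0.
Proof.
case: (pickP (fun z : F => Tr z != 0)) => [z Hz|H]; first by exists z.
exfalso.
pose p : {poly F} := \sum_(i < n) 'X^(q ^ i).
have pE z : p.[z] = Tr z by rewrite /p horner_sum; apply: eq_bigr => i _; rewrite hornerXn.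
have nn : (n.-1 < n)%N by rewrite prednK ?n_gt0.
have p_neq0 : p != 0.
  apply/eqP => p0; have := congr1 (fun p : {poly F} => p`_(q ^ n.-1)) p0.
  rewrite coef_sum coef0 (bigD1 (Ordinal nn)) //= coefXn eqxx big1 ?addr0 => [|i Hi].
    by move/eqP; rewrite oner_eq0.
  rewrite coefXn eqn_exp2l ?q_gt1 //.
  have : val i != n.-1 by move: Hi; apply: contra => /eqP Hi; apply/eqP/val_inj.
  by rewrite eq_sym => /negbTE ->.
have sz : (size p <= (q ^ n.-1).+1)%N.
  apply: leq_trans (size_sum _ _ _) _; apply/bigmax_leqP => i _.
  rewrite size_polyXn ltnS leq_exp2l ?q_gt1 //; have := ltn_ord i; have := n_gt0; lia.
have := max_poly_roots p_neq0 (_ : all (root p) (enum F)) (enum_uniq F).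
have -> : all (root p) (enum F).
  by apply/allP => z _; rewrite /root pE; move: (H z) => /= /negbFE.
move=> /(_ isT); rewrite -cardE cardF -expq => Hlt.
have Hpos : (0 < q ^ n.-1)%N by rewrite expn_gt0 ltnW ?q_gt1.
have Hq : (q ^ n = q * q ^ n.-1)%N by rewrite -expnS prednK ?n_gt0.
have h2 : (2 * q ^ n.-1 <= q ^ n)%N by rewrite Hq leq_mul2r q_gt1 orbT.
move: Hlt sz h2 Hpos; move: (q ^ n)%N (q ^ n.-1)%N (size p) => A B C; lia.
Qed.

Lemma Tr_onto (c t : F) : c != 0 -> t ^+ q = t -> exists x, Tr (x * c) = t.
Proof.
move=> c0 Ht; have [z Hz] := Tr_nonzero.
exists (t / Tr z * z / c).
rewrite mulrVK ?unitfE // Tr_scal; first by rewrite mulfVK.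
by rewrite exprMn exprVn Tr_q Ht.
Qed.
Lemma Fgt1 : (1 < #|F|)%N.
Proof. exact: finNzRing_gt1. Qed.

Lemma unitpow (x : F) : x != 0 -> x ^+ (#|F|.-1) = 1.
Proof.
move=> x0; apply: (mulfI x0); rewrite mulr1 -exprS prednK ?expf_card //.
exact: ltnW Fgt1.
Qed.

Lemma prim_exists : exists w : F, (#|F|.-1).-primitive_root w.
Proof.
pose rs := enum (predC1 (0 : F)).
have : has (#|F|.-1).-primitive_root rs.
  apply: has_prim_root.
  - by rewrite -subn1 subn_gt0 Fgt1.
  - apply/allP => x; rewrite mem_enum /= => x0.
    by rewrite unity_rootE unitpow.
  - exact: enum_uniq.
  - by rewrite -cardE cardC1.
by case/hasP => w _ Hw; exists w.
Qed.

Lemma A_easy (z a' b' : F) r d : z != 0 -> a' * z = b' * z ^+ (2 ^ r) ->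
  (d %| r)%N -> (2 ^ d - 1 %| #|F|.-1)%N ->
  a' ^+ (#|F|.-1 %/ (2 ^ d - 1)) = b' ^+ (#|F|.-1 %/ (2 ^ d - 1)).
Proof.
move=> z0 E dr dQ.
have Hr : (2 ^ r = (2 ^ r - 1).+1)%N by rewrite subn1 prednK // expn_gt0.
move: E; rewrite Hr exprS mulrCA mulrC => /(mulfI z0) ->.
have [c Hc] : exists c, (2 ^ r - 1 = c * (2 ^ d - 1))%N.
  by exists ((2 ^ r - 1) %/ (2 ^ d - 1))%N; rewrite divnK // dvd_pow2.
rewrite exprMn Hc -exprM -mulnA [(_ * (_ %/ _))%N]mulnC divnK // mulnC exprM unitpow // expr1n mulr1 //.
Qed.

Lemma root_ext (z : F) M k0 : (0 < M)%N -> z ^+ (2 ^ M) = z ->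
  exists y : F, y ^+ (2 ^ M) = y /\ y ^+ (2 ^ k0) = z.
Proof.
move=> M0 Hz; exists (z ^+ (2 ^ (M * k0 - k0))); split.
  by rewrite -exprM mulnC exprM Hz.
by rewrite -exprM -expnD subnK ?leq_pmull // expnM (fixpow _ Hz).
Qed.

Lemma A_hard (a' b' : F) r M : (0 < r)%N -> (0 < M)%N -> (M %| m * n)%N ->
  a' ^+ (2 ^ M) = a' -> b' ^+ (2 ^ M) = b' ->
  a' ^+ ((2 ^ M - 1) %/ (2 ^ gcdn r M - 1)) = b' ^+ ((2 ^ M - 1) %/ (2 ^ gcdn r M - 1)) ->
  exists z : F, [/\ z != 0, z ^+ (2 ^ M) = z & a' * z = b' * z ^+ (2 ^ r)].
Proof.
move=> r0 M0 MN Ha Hb.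
set T := (2 ^ M - 1)%N; set g := gcdn r M; set E := (T %/ (2 ^ g - 1))%N.
have gT : (2 ^ g - 1 %| T)%N by apply: dvd_pow2; exact: dvdn_gcdr.
have T0 : (0 < T)%N by rewrite /T subn_gt0 -{1}(expn0 2) ltn_exp2l.
have g0 : (0 < 2 ^ g - 1)%N.
  by rewrite subn_gt0 -{1}(expn0 2) ltn_exp2l // gcdn_gt0 r0.
have E0 : (0 < E)%N by rewrite /E divn_gt0 // dvdn_leq.
have TE : (T = E * (2 ^ g - 1))%N by rewrite /E divnK.
move=> HE.
case: (eqVneq a' 0) => [a0|a0].
  have b0 : b' = 0 by move: HE; rewrite a0 expr0n gtn_eqF // => /esym/eqP; rewrite expf_eq0 E0 /= => /eqP.
  by exists 1; rewrite oner_neq0 expr1n a0 b0 !mul0r.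
case: (eqVneq b' 0) => [b0|b0].
  by move: HE; rewrite b0 (expr0n _ E) gtn_eqF // => /eqP; rewrite expf_eq0 E0 (negbTE a0).
set u := a' / b'.
have u0 : u != 0 by rewrite mulf_neq0 ?invr_eq0.
have uM : u ^+ (2 ^ M) = u by rewrite exprMn exprVn Ha Hb.
have uE : u ^+ E = 1 by rewrite exprMn exprVn HE mulfV // expf_neq0.
have uT : u ^+ T = 1.
  by apply: (mulfI u0); rewrite mulr1 -exprS /T subn1 prednK ?uM // expn_gt0.
have [w Hw] := prim_exists.
have [[t ht] /= ut] := prim_rootP Hw (unitpow u0).
have Fm : (#|F| = 2 ^ (m * n))%N := cardF.
have TQ : (T %| #|F|.-1)%N by rewrite Fm -subn1 /T dvd_pow2.
set D := (#|F|.-1 %/ T)%N.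
have DT : (D * T = #|F|.-1)%N by rewrite /D divnK.
have wpow x : w ^+ (#|F|.-1 * x) = 1 by rewrite exprM (prim_expr_order Hw) expr1n.
have [i ti] : exists i, t = (D * i)%N.
  have : (#|F|.-1 %| t * T)%N by rewrite (prim_order_dvd Hw) exprM -ut uT.
  rewrite -DT dvdn_pmul2r // => /dvdnP [i ->]; by exists i; rewrite mulnC.
have [i' ii] : exists i', i = (i' * (2 ^ g - 1))%N.
  have : (#|F|.-1 %| t * E)%N by rewrite (prim_order_dvd Hw) exprM -ut uE.
  have D0 : (0 < D)%N.
    have h : (0 < D * T)%N by rewrite DT -subn1 subn_gt0 Fgt1.
    by rewrite muln_gt0 in h; case/andP: h.
  rewrite -DT ti -mulnA dvdn_pmul2l // TE [(i * E)%N]mulnC dvdn_pmul2l //.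
  by move=> /dvdnP [i' ->]; exists i'.
set s := (2 ^ r - 1)%N.
have s0 : (0 < s)%N by rewrite /s subn_gt0 -{1}(expn0 2) ltn_exp2l.
have gs : gcdn s T = (2 ^ g - 1)%N by rewrite /s /T gcd_pow2.
case: (egcdnP T s0) => km kn Heq _.
rewrite gs in Heq.
exists (w ^+ (D * km * i')).
have w0 : w != 0.
  apply/negP => /eqP w0; move: (prim_expr_order Hw); rewrite w0 expr0n.
  by rewrite -subn1 subn_eq0 leqNgt Fgt1 /= => /eqP; rewrite eq_sym oner_eq0.
have zT : (w ^+ (D * km * i')) ^+ T = 1.
  rewrite -exprM (_ : (D * km * i' * T = #|F|.-1 * (km * i'))%N) ?wpow //.
  by rewrite -DT; ring.
have zs : (w ^+ (D * km * i')) ^+ s = u.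
  rewrite -exprM (_ : (D * km * i' * s = #|F|.-1 * (kn * i') + t)%N); last first.
    rewrite (_ : (D * km * i' * s = D * i' * (km * s))%N); last by ring.
    by rewrite Heq ti ii -DT; ring.
  by rewrite exprD wpow mul1r ut.
split.
- by rewrite expf_neq0.
- have -> : (2 ^ M = T.+1)%N by rewrite /T subn1 prednK // expn_gt0.
  by rewrite exprSr zT mul1r.
- have -> : (2 ^ r = s.+1)%N by rewrite /s subn1 prednK // expn_gt0.
  rewrite exprSr zs /u; field; exact: b0.
Qed.

Variables (a b : F) (k l : nat).
Notation L := (linL a b k l).
Notation W y := (in_Fq2 q y).
Definition ff (x : F) := Tr (x ^+ (q + 1)) + L x.

Lemma frobDqq (x y : F) : (x + y) ^+ q = x ^+ q + y ^+ q.
Proof. exact: (frobD ch2). Qed.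

Lemma L_add x y : L (x + y) = L x + L y.
Proof. rewrite /linL !(frobD ch2); ring. Qed.

Lemma L0 : L 0 = 0.
Proof. by rewrite /linL !frob0 !mulr0 addr0. Qed.

Lemma Linj_iff : injective L <-> (forall y, L y = 0 -> y = 0).
Proof.
split=> [Hi y Hy|H x1 x2 E]; first by apply: Hi; rewrite Hy L0.
have : L (x1 + x2) = 0 by rewrite L_add E (addxx ch2).
by move/H/(add_eq0 ch2).
Qed.

Lemma pow_qq (y : F) : y ^+ (q ^ 2) = (y ^+ q) ^+ q.
Proof. by rewrite -exprM mulnn. Qed.

Lemma ff_add x y : ff (x + y) = ff x + ff y + Tr (x ^+ q * y + x * y ^+ q).
Proof.
rewrite /ff addn1 !exprSr frobDqq L_add.
have -> : (x ^+ q + y ^+ q) * (x + y) = x ^+ q * x + (x ^+ q * y + x * y ^+ q) + y ^+ q * y by ring.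
rewrite !Tr_add; ring.
Qed.

Lemma W0 : W (0 : F).
Proof. by rewrite /in_Fq2 expr0n eqn0Ngt expn_gt0 (ltnW q_gt1). Qed.

Lemma Tr_cross_W (x y : F) : W y -> Tr (x ^+ q * y + x * y ^+ q) = 0.
Proof.
move=> /eqP Wy.
have -> : x ^+ q * y = (x * y ^+ q) ^+ q by rewrite exprMn -pow_qq Wy.
by rewrite Tr_add Tr_shift (addxx ch2).
Qed.

Lemma Tr_cross_onto (y t : F) : ~~ W y -> t ^+ q = t ->
  exists x, Tr (x ^+ q * y + x * y ^+ q) = t.
Proof.
move=> nW Ht.
set y' := y ^+ (q ^ n.-1).
have Hy' : y' ^+ q = y by rewrite -exprM -expnSr prednK ?n_gt0 // xQ.
have c0 : y' + y ^+ q != 0.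
  apply: contra nW => /eqP /(add_eq0 ch2) E.
  by rewrite /in_Fq2 pow_qq -E Hy'.
have [x Hx] := Tr_onto c0 Ht; exists x.
rewrite -Hx -{1}Hy' -exprMn Tr_add Tr_shift -Tr_add; congr Tr; ring.
Qed.

Lemma Tr_W (y : F) : W y -> Tr (y ^+ (q + 1)) = 0.
Proof.
move=> /eqP Wy; apply: Tr_fixed.
by rewrite addn1 exprSr exprMn -pow_qq Wy mulrC.
Qed.

Lemma PP_iff : bijective ff <-> (injective L /\ forall y, L y ^+ q = L y -> W y).
Proof.
have ff0 : ff 0 = 0 by rewrite /ff L0 Tr_W ?W0 // addr0.
split.
- move=> /bij_inj Hi.
  have P2 y : W y -> L y = 0 -> y = 0.
    move=> Wy Ly; apply: Hi; by rewrite ff0 /ff Ly Tr_W // addr0.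
  have P1 y : L y ^+ q = L y -> W y.
    move=> Hq; apply/negPn/negP => nW.
    have Ht : (ff y) ^+ q = ff y by rewrite /ff frobDqq Tr_q Hq.
    have [x Hx] := Tr_cross_onto nW Ht.
    have E : ff (x + y) = ff x by rewrite ff_add Hx -addrA (addxx ch2) addr0.
    have /Hi/eqP : ff (x + y) = ff (x + 0) by rewrite E addr0.
    rewrite (inj_eq (addrI x)) => /eqP y0; by move: nW; rewrite y0 W0.
  split=> //; apply/Linj_iff => y Ly; apply: P2 => //; apply: P1.
  by rewrite Ly expr0n expn_eq0.
- move=> [Li P1]; apply: injF_bij => x1 x2 E.
  set y := x1 + x2.
  have Ex1 : x1 = x2 + y by rewrite /y addrCA (addxx ch2) addr0.
  move: E; rewrite Ex1 ff_add => E.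
  have Efy : ff y = Tr (x2 ^+ q * y + x2 * y ^+ q).
    apply: (add_eq0 ch2); apply: (addrI (ff x2)); rewrite addr0 -[RHS]E; ring.
  have HL : L y = ff y + Tr (y ^+ (q + 1)).
    by rewrite /ff addrC addrA (addxx ch2) add0r.
  have Wy : W y by apply: P1; rewrite HL frobDqq Efy !Tr_q.
  have : L y = 0 by rewrite HL Efy Tr_W // Tr_cross_W // addr0.
  by rewrite -L0 => /Li ->; rewrite addr0.
Qed.
Hypothesis kl : (k < l)%N.

Lemma Wdef (x : F) : W x = (x ^+ (2 ^ (2 * m)) == x).
Proof. by rewrite /in_Fq2 -expnM mulnC. Qed.

Lemma WP (x : F) : reflect (x ^+ (q ^ 2) = x) (W x).
Proof. exact: eqP. Qed.

Lemma Wmul (x y : F) : W x -> W y -> W (x * y).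
Proof. by move=> /WP Hx /WP Hy; apply/WP; rewrite exprMn Hx Hy. Qed.

Lemma Wadd (x y : F) : W x -> W y -> W (x + y).
Proof. by move=> /WP Hx /WP Hy; apply/WP; rewrite frobDq Hx Hy. Qed.

Lemma Winv (x : F) : W x -> W (x^-1).
Proof. by move=> /WP Hx; apply/WP; rewrite exprVn Hx. Qed.

Lemma Wpow (x : F) j : W x -> W (x ^+ j).
Proof. by move=> /WP Hx; apply/WP; rewrite -exprM mulnC exprM Hx. Qed.

Lemma Fq_W (x : F) : x ^+ q = x -> W x.
Proof. by move=> Hx; apply/WP; rewrite pow_qq !Hx. Qed.

Lemma W_pow_mod (w : F) j : W w -> w ^+ (2 ^ j) = w ^+ (2 ^ (j %% (2 * m))).
Proof.
move=> /WP Hw.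
have Hw' : w ^+ (2 ^ (2 * m)) = w by rewrite mulnC expnM.
rewrite {1}(divn_eq j (2 * m)) expnD exprM.
by rewrite (mulnC _ (2 * m)) expnM (fixpow _ Hw').
Qed.

Lemma pow_l (y : F) : y ^+ (2 ^ l) = (y ^+ (2 ^ k)) ^+ (2 ^ (l - k)).
Proof. by rewrite -exprM -expnD subnKC // ltnW. Qed.

Lemma L_eq0 (y : F) : L y = 0 -> a * y ^+ (2 ^ k) = b * y ^+ (2 ^ l).
Proof. by move/(add_eq0 ch2). Qed.

Lemma Lfrob (y : F) : W a -> W b -> L (y ^+ (q ^ 2)) = (L y) ^+ (q ^ 2).
Proof.
move=> /WP Ha /WP Hb; rewrite /linL frobDq !exprMn Ha Hb.
by rewrite -!exprM [(q ^ 2 * _)%N]mulnC [(q ^ 2 * (2 ^ l))%N]mulnC.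
Qed.

Lemma solve2 (A2 B2 u v c : F) : a * u + b * v = c -> A2 * u + B2 * v = c ->
  (A2 * b + a * B2) * u = c * (b + B2) /\ (A2 * b + a * B2) * v = c * (a + A2).
Proof.
move=> e1 e2.
have d0 : (a * u + b * v) - (A2 * u + B2 * v) = 0 by rewrite e1 e2 subrr.
split; apply/eqP; rewrite -subr_eq0; apply/eqP; rewrite -e1.
- have -> : (A2 * b + a * B2) * u - (a * u + b * v) * (b + B2)
      = - ((b * B2 * v) *+ 2 + b * ((a * u + b * v) - (A2 * u + B2 * v))) by ring.
  by rewrite d0 mulr0 addr0 mulr2n (addxx ch2) oppr0.
- have -> : (A2 * b + a * B2) * v - (a * u + b * v) * (a + A2)
      = - ((a * A2 * u) *+ 2 + a * ((a * u + b * v) - (A2 * u + B2 * v))) by ring.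
  by rewrite d0 mulr0 addr0 mulr2n (addxx ch2) oppr0.
Qed.

Lemma noroot (M : nat) : (0 < M)%N -> (M %| m * n)%N ->
  a ^+ (2 ^ M) = a -> b ^+ (2 ^ M) = b -> injective L ->
  a ^+ ((2 ^ M - 1) %/ (2 ^ gcdn (l - k) M - 1)) !=
  b ^+ ((2 ^ M - 1) %/ (2 ^ gcdn (l - k) M - 1)).
Proof.
move=> M0 MN Ha Hb Li; apply/negP => /eqP HE.
have r0 : (0 < l - k)%N by rewrite subn_gt0.
have [z [z0 zM Ez]] := A_hard r0 M0 MN Ha Hb HE.
have [y [_ yk]] := root_ext k M0 zM.
have : L y = 0 by rewrite /linL pow_l yk Ez (addxx ch2).
rewrite -L0 => /Li y0; move: yk; rewrite y0 frob0 => z0'.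
by rewrite -z0' eqxx in z0.
Qed.

Lemma cross (x y u v : F) : u != 0 -> v != 0 -> x / u = y / v -> v * x = u * y.
Proof.
move=> u0 v0 H.
have -> : x = y / v * u by rewrite -H mulfVK.
by field.
Qed.

Lemma modm_eq0 : (k %% (2 * m) == l %% (2 * m))%N = ((l - k) %% (2 * m) == 0)%N.
Proof.
have -> : ((l - k) %% (2 * m) == 0)%N = (2 * m %| l - k)%N by [].
by rewrite -eqn_mod_dvd ?(ltnW kl) // eq_sym.
Qed.

Lemma Wfix (w : F) : W w -> w ^+ (2 ^ (2 * m)) = w.
Proof. by rewrite Wdef => /eqP. Qed.

Lemma Wfix' (w : F) : w ^+ (2 ^ (2 * m)) = w -> W w.
Proof. by rewrite Wdef => ->. Qed.

Notation A2 := (a ^+ (q ^ 2)).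
Notation B2 := (b ^+ (q ^ 2)).
Notation delta := (a ^+ (q ^ 2) * b + a * b ^+ (q ^ 2)).
Notation Ed := ((q ^ n - 1) %/ (2 ^ gcdn (l - k) (m * n) - 1))%N.
Notation Ee := ((q ^ 2 - 1) %/ (2 ^ gcdn (l - k) (2 * m) - 1))%N.
Notation RHS := ((a ^+ Ed != b ^+ Ed) /\
  ( [/\ ((l - k) %% (2 * m) == m)%N, ~~ W a, delta != 0,
        delta ^+ q * (a ^+ (q ^ 2) + a) + delta * (b ^+ (q ^ 3) + b ^+ q) = 0
      & delta ^+ q * (b ^+ (q ^ 2) + b) + delta * (a ^+ (q ^ 3) + a ^+ q) = 0]
    \/ [/\ (k %% (2 * m) != l %% (2 * m))%N, W a, W b
      & a ^+ Ee != b ^+ Ee]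
    \/ ((k %% (2 * m) == l %% (2 * m))%N /\ W (a + b)))).

Lemma q3 (x : F) : (x ^+ (q ^ 2)) ^+ q = x ^+ (q ^ 3).
Proof. by rewrite -exprM -expnSr. Qed.

Lemma backward : RHS -> injective L /\ (forall y, L y ^+ q = L y -> W y).
Proof.
move=> [HEd Hcases].
have Li : injective L.
  apply/Linj_iff => y Ly; apply/eqP; apply/negPn/negP => y0.
  have z0 : y ^+ (2 ^ k) != 0 by rewrite expf_neq0.
  have Ez : a * y ^+ (2 ^ k) = b * (y ^+ (2 ^ k)) ^+ (2 ^ (l - k)) by rewrite -pow_l L_eq0.
  have dQ : (2 ^ gcdn (l - k) (m * n) - 1 %| #|F|.-1)%N.
    by rewrite cardF -subn1 dvd_pow2 // dvdn_gcdr.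
  have := A_easy z0 Ez (dvdn_gcdl _ _) dQ.
  by rewrite cardF -subn1 -expq => /eqP; rewrite (negbTE HEd).
split=> // y Hy.
set c := L y in Hy.
have Wc : W c by apply: Fq_W.
case: Hcases => [[Hm nWa d0 eq1 eq2] | [[_ Wa Wb _] | [Hkl Wab]]].
- set al := (b + B2) / delta; set be := (a + A2) / delta.
  have dq0 : delta ^+ q != 0 by rewrite expf_neq0.
  have alq : al ^+ q = be.
    rewrite /al /be exprMn exprVn frobDqq q3.
    apply/eqP; rewrite eq_sym -subr_eq0 (oppx ch2); apply/eqP.
    have -> : (a + A2) / delta + (b ^+ q + b ^+ (q ^ 3)) / delta ^+ q
      = (delta ^+ q * (A2 + a) + delta * (b ^+ (q ^ 3) + b ^+ q)) / (delta * delta ^+ q).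
      by field; rewrite d0 dq0.
    by rewrite eq1 mul0r.
  have beq : be ^+ q = al.
    rewrite /al /be exprMn exprVn frobDqq q3.
    apply/eqP; rewrite -subr_eq0 (oppx ch2); apply/eqP.
    have -> : (a ^+ q + a ^+ (q ^ 3)) / delta ^+ q + (b + B2) / delta
      = (delta ^+ q * (B2 + b) + delta * (a ^+ (q ^ 3) + a ^+ q)) / (delta * delta ^+ q).
      by field; rewrite d0 dq0.
    by rewrite eq2 mul0r.
  have Wal : W al by apply/WP; rewrite pow_qq alq beq.
  have Wcal : W (c * al) by apply: Wmul.
  have m2 : (0 < 2 * m)%N by rewrite muln_gt0.
  have [z [zM zk]] := root_ext k m2 (Wfix Wcal).
  have Lz : L z = c.
    rewrite /linL pow_l zk W_pow_mod // (eqP Hm) -/q exprMn Hy alq.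
    have -> : a * (c * al) + b * (c * be) = c * ((a * (b + B2) + b * (a + A2)) / delta).
      by rewrite /al /be; field.
    have -> : a * (b + B2) + b * (a + A2) = (a * b) *+ 2 + delta by ring.
    by rewrite mulr2n (addxx ch2) add0r mulfV // mulr1.
  have <- : z = y by apply: Li; rewrite Lz.
  exact: Wfix'.
- apply/WP; apply: Li; rewrite Lfrob //; exact/WP.
- have rm : ((l - k) %% (2 * m) = 0)%N by apply/eqP; rewrite -modm_eq0.
  have ab0 : a + b != 0.
    apply/negP => /eqP ab0.
    have : L 1 = L 0 by rewrite L0 /linL !expr1n !mulr1.
    by move/Li/eqP; rewrite oner_eq0.
  set ze := c / (a + b).
  have Wze : W ze by apply: Wmul => //; apply: Winv.
  have m2 : (0 < 2 * m)%N by rewrite muln_gt0.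
  have [z [zM zk]] := root_ext k m2 (Wfix Wze).
  have Lz : L z = c.
    rewrite /linL pow_l zk W_pow_mod // rm expn0 expr1 -mulrDl /ze mulrC divfK //.
  have <- : z = y by apply: Li; rewrite Lz.
  exact: Wfix'.
Qed.

Lemma m_dvd_r : (forall c : F, c ^+ q = c -> c ^+ (2 ^ (l - k)) = c) -> (m %| l - k)%N.
Proof.
move=> H.
have [w Hw] := prim_exists.
have qQ : (q - 1 %| #|F|.-1)%N by rewrite cardF -subn1 /q dvd_pow2 // dvdn_mulr.
set D := (#|F|.-1 %/ (q - 1))%N.
have DT : (D * (q - 1) = #|F|.-1)%N by rewrite /D divnK.
set h := w ^+ D.
have w0 : w != 0.
  apply/negP => /eqP w0; move: (prim_expr_order Hw); rewrite w0 expr0n.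
  by rewrite -subn1 subn_eq0 leqNgt Fgt1 /= => /eqP; rewrite eq_sym oner_eq0.
have h0 : h != 0 by rewrite expf_neq0.
have hq1 : h ^+ (q - 1) = 1 by rewrite /h -exprM DT (prim_expr_order Hw).
have hq : h ^+ q = h.
  have -> : q = (q - 1).+1 by rewrite subn1 prednK // ltnW // q_gt1.
  by rewrite exprSr hq1 mul1r.
have := H h hq.
have -> : (2 ^ (l - k) = (2 ^ (l - k) - 1).+1)%N by rewrite subn1 prednK // expn_gt0.
move=> Hh; have hr : h ^+ (2 ^ (l - k) - 1) = 1.
  by apply: (mulIf h0); rewrite mul1r -exprSr.

have : (#|F|.-1 %| D * (2 ^ (l - k) - 1))%N by rewrite (prim_order_dvd Hw) exprM hr.
have D0 : (0 < D)%N.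
  have hh : (0 < D * (q - 1))%N by rewrite DT -subn1 subn_gt0 Fgt1.
  by rewrite muln_gt0 in hh; case/andP: hh.
rewrite -DT dvdn_pmul2l // => /pow2_dvd_inv.
done.
Qed.

Lemma forward : injective L -> (forall y, L y ^+ q = L y -> W y) -> RHS.
Proof.
move=> Li P1.
case: (injF_bij Li) => Linv LK KL.
have Wpre c : c ^+ q = c -> W (Linv c) by move=> Hc; apply: P1; rewrite KL.
have r0 : (0 < l - k)%N by rewrite subn_gt0.
have mn0 : (0 < m * n)%N by rewrite muln_gt0 m_gt0 n_gt0.
have m2 : (0 < 2 * m)%N by rewrite muln_gt0.
have m2n : (2 * m %| m * n)%N.
  rewrite mulnC dvdn_pmul2l //; rewrite -{1}(odd_double_half n) (negbTE n_even) add0n.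
  by rewrite -muln2 dvdn_mull.
split.
  have Ha : a ^+ (2 ^ (m * n)) = a by rewrite -cardF expf_card.
  have Hb : b ^+ (2 ^ (m * n)) = b by rewrite -cardF expf_card.
  by have := noroot mn0 (dvdnn _) Ha Hb Li; rewrite -expq.
set y1 := Linv 1.
have Wy1 : W y1 by apply: Wpre; rewrite expr1n.
have e1 : a * y1 ^+ (2 ^ k) + b * y1 ^+ (2 ^ l) = 1 by exact: (KL 1).
case: (eqVneq (k %% (2 * m))%N (l %% (2 * m))%N) => Hkl.
  right; right; split => //.
  have rm : ((l - k) %% (2 * m) = 0)%N by apply/eqP; rewrite -modm_eq0 Hkl eqxx.
  set u := y1 ^+ (2 ^ k).
  have Wu : W u by apply: Wpow.
  have Hu : (a + b) * u = 1.
    by rewrite -e1 pow_l -/u W_pow_mod // rm expn0 expr1 mulrDl.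
  have u0 : u != 0 by apply/negP => /eqP u0; move: Hu; rewrite u0 mulr0 => /eqP; rewrite eq_sym oner_eq0.
  have -> : a + b = u^-1 by rewrite -[a + b]mulr1 -(mulfV u0) mulrA Hu mul1r.
  exact: Winv.
have rm : ((l - k) %% (2 * m) != 0)%N by rewrite -modm_eq0.
set u := y1 ^+ (2 ^ k); set v := y1 ^+ (2 ^ l).
have Wu : W u by apply: Wpow.
have Wv : W v by apply: Wpow.
case: (eqVneq delta 0) => Hd.
  right; left.
  have [Wa Wb] : W a /\ W b.
    case: (eqVneq b 0) => b0.
      move: e1; rewrite b0 mul0r addr0 -/u => Hau.
      have u0 : u != 0 by apply/negP => /eqP u0; move: Hau; rewrite u0 mulr0 => /eqP; rewrite eq_sym oner_eq0.
      have -> : a = u^-1 by rewrite -[a]mulr1 -(mulfV u0) mulrA Hau mul1r.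
      by split; [apply: Winv | apply: W0].
    set la := a / b.
    have Hcr : A2 * b = a * B2 by apply: (add_eq0 ch2).
    have B20 : B2 != 0 by rewrite expf_neq0.
    have Wla : W la.
      apply/WP; rewrite /la exprMn exprVn.
      have -> : A2 = a * B2 / b by rewrite -Hcr mulfK.
      by field; rewrite b0 B20.
    have Hb1 : b * (la * u + v) = 1 by rewrite -e1 -/u -/v /la; field.
    have s0 : la * u + v != 0 by apply/negP => /eqP s0; move: Hb1; rewrite s0 mulr0 => /eqP; rewrite eq_sym oner_eq0.
    have Hbb : b = (la * u + v)^-1 by rewrite -[b]mulr1 -(mulfV s0) mulrA Hb1 mul1r.
    have Wb : W b by rewrite Hbb; apply: Winv; apply: Wadd => //; apply: Wmul.
    split=> //.
    have -> : a = la * b by rewrite /la mulfVK.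
    exact: Wmul.
  split=> //.
  have := noroot m2 m2n (Wfix Wa) (Wfix Wb) Li.
  by rewrite (mulnC 2 m) -expnM -/q.
left.
have key c : c ^+ q = c ->
   delta * (Linv c) ^+ (2 ^ k) = c * (b + B2) /\ delta * (Linv c) ^+ (2 ^ l) = c * (a + A2).
  move=> Hc; set y := Linv c.
  have Wy : W y by apply: Wpre.
  have ec : a * y ^+ (2 ^ k) + b * y ^+ (2 ^ l) = c by exact: (KL c).
  have ec2 : A2 * y ^+ (2 ^ k) + B2 * y ^+ (2 ^ l) = c.
    have /WP Wc : W c by apply: Fq_W.
    rewrite -Wc -ec frobDq !exprMn.
    by rewrite (WP _ (Wpow _ Wy)) (WP _ (Wpow _ Wy)).
  by have [-> ->] := solve2 ec ec2.
set al := (b + B2) / delta; set be := (a + A2) / delta.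
have uc c : c ^+ q = c -> (Linv c) ^+ (2 ^ k) = c * al.
  move=> Hc; have [H1 _] := key c Hc.
  by rewrite /al mulrA -H1 mulrC mulrA mulVf // mul1r.
have vc c : c ^+ q = c -> (Linv c) ^+ (2 ^ l) = c * be.
  move=> Hc; have [_ H1] := key c Hc.
  by rewrite /be mulrA -H1 mulrC mulrA mulVf // mul1r.
have q1 : (1 : F) ^+ q = 1 by rewrite expr1n.
have ual : u = al by rewrite /u /y1 uc // mul1r.
have vbe : v = be by rewrite /v /y1 vc // mul1r.
have albe : al ^+ (2 ^ (l - k)) = be by rewrite -ual -vbe /v pow_l.
have be0 : be != 0.
  apply/negP => /eqP be0; move: e1; rewrite -/v vbe be0 mulr0 addr0.
  have -> : y1 = 0.
    have : v == 0 by rewrite vbe be0.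
    by rewrite /v expf_eq0 => /andP [_ /eqP].
  by rewrite frob0 mulr0 => /eqP; rewrite eq_sym oner_eq0.
have cfix (c : F) : c ^+ q = c -> c ^+ (2 ^ (l - k)) = c.
  move=> Hc.
  have H : c ^+ (2 ^ (l - k)) * be = c * be.
    by rewrite -(vc c) // pow_l uc // exprMn albe.
  exact: (mulIf be0 H).
have mr := m_dvd_r cfix.
have Hm : ((l - k) %% (2 * m) = m)%N.
  case/dvdnP: mr => t ht; move: rm; rewrite ht mulnC (mulnC 2 m) -muln_modr.
  by rewrite muln_eq0 negb_or => /andP [_]; rewrite modn2; case: (odd t) => //; rewrite muln1.
have Wal : W al by rewrite -ual.
have alq : al ^+ q = be by rewrite -albe W_pow_mod // Hm.
have beq : be ^+ q = al by rewrite -alq -pow_qq; apply/WP.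
have dq0 : delta ^+ q != 0 by rewrite expf_neq0.
split.
- by rewrite Hm.
- apply/negP => /WP Wa; move: be0; rewrite /be Wa (addxx ch2) mul0r eqxx //.
- by rewrite ?Hd.
- move: alq; rewrite /al /be exprMn exprVn frobDqq q3 => /(cross dq0 Hd) E.
  by rewrite [A2 + a]addrC -E [b ^+ (q ^ 3) + _]addrC (addxx ch2).
- move: beq; rewrite /al /be exprMn exprVn frobDqq q3 => /(cross dq0 Hd) E.
  by rewrite [B2 + b]addrC -E [a ^+ (q ^ 3) + _]addrC (addxx ch2).
Qed.

End Main.

Local Open Scope ring_scope.

Theorem mainTheorem12 (F : finFieldType) (m n k l : nat) (a b : F) :
  (0 < m)%N -> ~~ odd n -> #|F| = (2 ^ (m * n))%N ->
  (k < l)%N -> (l < m * n)%N ->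
  (exists x : F, linL a b k l x != 0) ->
  let q := (2 ^ m)%N in
  let d := gcdn (l - k) (m * n) in
  let e := gcdn (l - k) (2 * m) in
  let delta := a ^+ (q ^ 2) * b + a * b ^+ (q ^ 2) in
  let Ed := ((q ^ n - 1) %/ (2 ^ d - 1))%N in
  let Ee := ((q ^ 2 - 1) %/ (2 ^ e - 1))%N in
  bijective (fun x : F => trace_q q n (x ^+ (q + 1)) + linL a b k l x) <->
  (a ^+ Ed != b ^+ Ed) /\
  ( [/\ ((l - k) %% (2 * m) == m)%N, ~~ in_Fq2 q a, delta != 0,
        delta ^+ q * (a ^+ (q ^ 2) + a) + delta * (b ^+ (q ^ 3) + b ^+ q) = 0
      & delta ^+ q * (b ^+ (q ^ 2) + b) + delta * (a ^+ (q ^ 3) + a ^+ q) = 0]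
    \/ [/\ (k %% (2 * m) != l %% (2 * m))%N, in_Fq2 q a, in_Fq2 q b
      & a ^+ Ee != b ^+ Ee]
    \/ ((k %% (2 * m) == l %% (2 * m))%N /\ in_Fq2 q (a + b))).
Proof.
move=> m0 nev cF kl _ _ q d e delta Ed Ee.
have PP := PP_iff m0 nev cF a b k l.
split.
- move=> H; have [Li P1] := PP.1 H.
  exact: (forward m0 nev cF kl Li P1).
- move=> H; apply: PP.2; exact: (backward m0 cF kl H).
Qed.
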